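(* Let $N$ be a positive integer, $t$ a nonnegative integer with $2t<N$, and $\epsilon_s>0$. Let $\mathcal A=\{x_1\le x_2\le\cdots\le x_N\}$ be $N$ real data points in an interval $[x_L,x_U]$, with $R=x_U-x_L$, and suppose the $N-2t$ centermost data points cover a range of length at least $d$, where $0<d<R$. Generate a split point $r\in[x_L,x_U]$ by the exponential mechanism with density (with respect to Lebesgue measure on $[x_L,x_U]$) proportional to $\exp\{\epsilon_s q(r)/2\}$, where $$q(r)=-\Big|\,|\mathcal A\cap[x_L,r)|-|\mathcal A\cap[r,x_U]|\,\Big|,$$ and split $\mathcal A$ into the blocks $\mathcal A\cap[x_L,r)$ and $\mathcal A\cap[r,x_U]$. Then the smaller of the two resulting blocks contains at least $t$ data points with probability at least $$\frac{d}{Re^{-\epsilon_s}+d(1-e^{-\epsilon_s})}.$$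
   Context: This randomized choice of $r$ is an $\epsilon_s$-differentially private version of splitting at the median (the score $q$ has sensitivity $1$). *)

(* Defs.v *)
From HB Require Import structures.
From mathcomp Require Import all_boot all_order all_algebra.
From mathcomp Require Import all_classical all_reals all_analysis.
Set Implicit Arguments. Unset Strict Implicit. Unset Printing Implicit Defensive.
Import Order.TTheory GRing.Theory Num.Theory.
Import numFieldNormedType.Exports.
Local Open Scope classical_set_scope.
Local Open Scope ring_scope.

(* Data points x : 'I_N -> R (a multiset, counted with multiplicity). *)

Definition cnt_left (R : realType) (N : nat) (x : 'I_N -> R) (xL r : R) : nat :=
  #|[set i : 'I_N | (xL <= x i) && (x i < r)]|.

Definition cnt_right (R : realType) (N : nat) (x : 'I_N -> R) (xU r : R) : nat :=
  #|[set i : 'I_N | (r <= x i) && (x i <= xU)]|.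

Definition split_score (R : realType) (N : nat) (x : 'I_N -> R) (xL xU r : R) : R :=
  - `| (cnt_left x xL r)%:R - (cnt_right x xU r)%:R |.

Definition exp_weight (R : realType) (N : nat) (x : 'I_N -> R) (xL xU eps r : R) : R :=
  expR (eps * split_score x xL xU r / 2).

Definition expmech_prob (R : realType) (N : nat) (x : 'I_N -> R) (xL xU eps : R)
  (E : set R) : R :=
  (\int[(@lebesgue_measure R)]_(r in `[xL, xU] `&` E) exp_weight x xL xU eps r)
  / (\int[(@lebesgue_measure R)]_(r in `[xL, xU]) exp_weight x xL xU eps r).

(* Main.v *)
Require Import Defs.
Set Implicit Arguments. Unset Strict Implicit.
From HB Require Import structures.
From mathcomp Require Import all_boot all_order all_algebra.
From mathcomp Require Import all_classical all_reals all_analysis.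
From mathcomp Require Import ring lra zify measurable_realfun.
Import Order.TTheory GRing.Theory Num.Theory.
Import numFieldNormedType.Exports.
Local Open Scope classical_set_scope.
Local Open Scope ring_scope.

Lemma card_ge N (P : pred 'I_N) a b : (b <= N)%N ->
  (forall i : 'I_N, (a <= i < b)%N -> P i) -> (b - a <= #|P|)%N.
Proof.
move=> bN hP.
have lt k : (k < b - a)%N -> (a + k < N)%N by lia.
pose f (k : 'I_(b - a)) : 'I_N := Ordinal (lt _ (ltn_ord k)).
have inj : injective f by move=> k1 k2 /(congr1 val) /= /addnI /val_inj.
rewrite -[X in (X <= _)%N]card_ord -cardsT -(card_imset [set: 'I_(b-a)]%SET inj).
apply: subset_leq_card; apply/fintype.subsetP => i /imsetP [k _ ->].
by apply: hP => /=; have := ltn_ord k; lia.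
Qed.

Lemma bounded_int (R : realType) (A : set R) (f : R -> R) (M : R) :
  measurable A -> (lebesgue_measure A < +oo)%E -> measurable_fun setT f ->
  (forall r, `|f r| <= M) -> (lebesgue_measure).-integrable A (EFin \o f).
Proof.
move=> mA Afin mf hM; apply: measurable_bounded_integrable => //.
  exact: measurable_funTS.
exists M; split; first exact: num_real.
move=> y My r _; exact: le_trans (hM r) (ltW My).
Qed.
Lemma cntLE (R : realType) N (x : 'I_N -> R) xL r :
  cnt_left x xL r = #|[pred i | (xL <= x i) && (x i < r)]|.
Proof.
apply: eq_card => i; rewrite inE /=.
by apply/idP/idP => [/set_mem|]; [|move=> h; apply/mem_set].
Qed.

Lemma cntRE (R : realType) N (x : 'I_N -> R) xU r :
  cnt_right x xU r = #|[pred i | (r <= x i) && (x i <= xU)]|.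
Proof.
apply: eq_card => i; rewrite inE /=.
by apply/idP/idP => [/set_mem|]; [|move=> h; apply/mem_set].
Qed.

Section S.
Variables (R : realType) (N : nat) (xL xU : R) (x : 'I_N -> R).
Hypothesis hx : forall i, xL <= x i <= xU.

Lemma cntLR r : (cnt_left x xL r + cnt_right x xU r = N)%N.
Proof.
rewrite cntLE cntRE.
have -> : #|[pred i | (r <= x i) && (x i <= xU)]| =
   #|[predC [pred i | (xL <= x i) && (x i < r)]]|.
  apply: eq_card => i; rewrite !inE; have /andP[h1 h2] := hx i.
  by rewrite h1 h2 /= andbT -leNgt.
by rewrite cardC card_ord.
Qed.

Definition fL (r : R) : R := \sum_(i < N) \1_(`]x i, +oo[) r.

Lemma fLE r : (cnt_left x xL r)%:R = fL r.
Proof.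
rewrite cntLE /fL -sum1_card natr_sum big_mkcond /=.
apply: eq_bigr => i _; rewrite inE indicE; have /andP[h1 h2] := hx i.
rewrite h1 /= mem_setE in_itv /= andbT.
by case: (x i < r).
Qed.

Lemma fL_meas : measurable_fun setT fL.
Proof.
apply: measurable_sum => i; apply: measurable_indic.
exact: measurable_itv.
Qed.
End S.


Lemma Isub_lem (R : realType) N t xL xU (x : 'I_N -> R)
  (hx : forall i : 'I_N, xL <= x i <= xU)
  (hmono : forall i j : 'I_N, (i <= j)%N -> x i <= x j)
  (it jt : 'I_N) (hit : nat_of_ord it = t) (hjt : nat_of_ord jt = (N - t.+1)%N)
  (tN : (2 * t < N)%N) r :
  x it < r <= x jt ->
  (xL <= r <= xU) /\ (t <= minn (cnt_left x xL r) (cnt_right x xU r))%N.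
Proof.
move=> /andP[h1 h2]; split.
  have /andP[h3 _] := hx it; have /andP[_ h4] := hx jt.
  by rewrite (le_trans h3 (ltW h1)) (le_trans h2 h4).
rewrite leq_min; apply/andP; split.
- rewrite cntLE; apply: (@leq_trans (t - 0)); first by rewrite subn0.
  apply: card_ge; first by lia.
  move=> i /andP[_ hi]; rewrite inE; have /andP[h3 _] := hx i.
  have h5 : x i <= x it by apply: hmono; lia.
  by rewrite h3 (le_lt_trans h5 h1).
- rewrite cntRE; apply: (@leq_trans (N - (N - t))); first by lia.
  apply: card_ge => //.
  move=> i /andP[hi _]; rewrite inE; have /andP[_ h4] := hx i.
  have h5 : x jt <= x i by apply: hmono; lia.
  by rewrite h4 (le_trans h2 h5).
Qed.

Lemma final_alg (R : realType) (d Rr G B c e g1 : R) :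
  0 < d -> d < Rr -> 0 < c -> 0 < e -> e < 1 -> 0 <= B -> d <= g1 ->
  c * g1 <= G -> B <= c * e * (Rr - g1) ->
  d / (Rr * e + d * (1 - e)) <= G / (G + B).
Proof.
move=> d0 dR c0 e0 e1 B0 g1d hG hB.
have G0 : 0 < G by apply: (lt_le_trans _ hG); apply: mulr_gt0 => //; lra.
have D0 : 0 < Rr * e + d * (1 - e).
  by apply: addr_gt0; apply: mulr_gt0 => //; lra.
rewrite ler_pdivlMr; last lra.
rewrite mulrAC ler_pdivrMr //.
have h1 : d * B <= d * (c * e * (Rr - g1)) by apply: ler_wpM2l => //; lra.
have h2 : c * g1 * (e * (Rr - d)) <= G * (e * (Rr - d)).
  by apply: ler_wpM2r => //; apply: mulr_ge0; lra.
have h3 : 0 <= c * e * Rr * (g1 - d).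
  by apply: mulr_ge0; [apply: mulr_ge0; [apply: mulr_ge0|]|]; lra.
nra.
Qed.

Unset Implicit Arguments.
Set Strict Implicit.

Theorem mainTheorem3 (R : realType) (N t : nat) (eps xL xU d : R)
  (x : 'I_N -> R) :
  (0 < N)%N -> (2 * t < N)%N -> 0 < eps ->
  (forall i : 'I_N, xL <= x i <= xU) ->
  (forall i j : 'I_N, (i <= j)%N -> x i <= x j) ->
  (forall i j : 'I_N, nat_of_ord i = t -> nat_of_ord j = (N - t.+1)%N ->
     d <= x j - x i) ->
  0 < d -> d < xU - xL ->
  d / ((xU - xL) * expR (- eps) + d * (1 - expR (- eps)))
  <= expmech_prob x xL xU eps
       [set r | (t <= minn (cnt_left x xL r) (cnt_right x xU r))%N].
Proof.
move=> N0 tN eps0 hx hmono hd d0 dR.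
set E := [set r | _].
set w := exp_weight x xL xU eps.
have cRE r : (cnt_right x xU r)%:R = N%:R - fL x r :> R.
  have := congr1 (fun n => n%:R : R) (cntLR hx r); rewrite /= natrD -(fLE hx).
  by move=> <-; rewrite addrAC subrr add0r.
have ELE r : E r <-> (t%:R <= fL x r <= N%:R - t%:R).
  have hab := congr1 (fun n => n%:R : R) (cntLR hx r); rewrite /= natrD in hab.
  rewrite -(fLE hx) /E /= leq_min; split.
  - move/andP => [h1 h2]; move: h1 h2; rewrite -!(ler_nat R) => h1 h2; apply/andP; split => //; lra.
  - move=> /andP[h1 h2]; apply/andP; split; rewrite -(ler_nat R); lra.
have mE : measurable E.
  have -> : E = setT `&` (fL x) @^-1` `[t%:R, N%:R - t%:R].
    apply/seteqP; split => r /=; rewrite ELE in_itv //=.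
    by case.
  by apply: (@fL_meas _ _ x) => //; exact: measurable_itv.
have wE r : w r = expR (- (eps / 2) * `|2 * fL x r - N%:R|).
  rewrite /w /exp_weight /split_score cRE (fLE hx).
  have -> : fL x r - (N%:R - fL x r) = 2 * fL x r - N%:R by ring.
  congr expR; ring.
have mw : measurable_fun setT w.
  have -> : w = (fun r => expR (- (eps / 2) * `|2 * fL x r - N%:R|)).
    by apply/funext => r; rewrite wE.
  apply: measurableT_comp; first exact: measurable_expR.
  apply: measurableT_comp; first exact: mulrl_measurable.
  apply: measurableT_comp; first exact: normr_measurable.
  apply: measurable_funB; last exact: measurable_cst.
  apply: measurableT_comp; first exact: mulrl_measurable.
  exact: (@fL_meas _ _ x).
set c := expR (- (eps / 2) * (N%:R - 2 * t%:R)).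
have c0 : 0 < c by apply: expR_gt0.
have wG r : E r -> c <= w r.
  move/ELE => /andP[h1 h2].
  have hs : `|2 * fL x r - N%:R| <= N%:R - 2 * t%:R.
    rewrite ler_norml; apply/andP; split; lra.
  rewrite wE /c ler_expR; nra.
have wB r : ~ E r -> w r <= c * expR (- eps).
  move=> nE.
  have hab := congr1 (fun n => n%:R : R) (cntLR hx r); rewrite /= natrD in hab.
  have : ~~ ((t <= cnt_left x xL r) && (t <= cnt_right x xU r))%N.
    by apply/negP => h; apply: nE; rewrite /E /= leq_min.
  rewrite negb_and -!ltnNge => hh.
  have hs : N%:R - 2 * t%:R + 2 <= `|2 * fL x r - N%:R|.
    have := ler_norm (2 * fL x r - N%:R).
    have := ler_norm (- (2 * fL x r - N%:R)); rewrite normrN.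
    rewrite -(fLE hx).
    case/orP: hh => h; move: h; rewrite -(ler_nat R) -natr1 => h; lra.
  rewrite wE /c -expRD ler_expR; nra.
have w0 r : 0 <= w r by rewrite /w /exp_weight expR_ge0.
have w1 r : `|w r| <= 1.
  by rewrite ger0_norm // wE expR_le1 mulNr oppr_le0 mulr_ge0 // divr_ge0 // ltW.
set A := `[xL, xU]%classic.
have mA : measurable A by apply: measurable_itv.
have muA : lebesgue_measure A = (xU - xL)%:E.
  rewrite /A lebesgue_measure_itv /= ifT //; rewrite lte_fin; lra.
have finS S : measurable S -> S `<=` A -> (lebesgue_measure S < +oo)%E.
  move=> mS SA; have h : (lebesgue_measure S <= lebesgue_measure A)%E by apply: le_measure => //; rewrite inE.
  by apply: (le_lt_trans h); rewrite muA ltey.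
have intS S (f : R -> R) (M : R) : measurable S -> S `<=` A -> measurable_fun setT f ->
    (forall r, `|f r| <= M) -> (lebesgue_measure).-integrable S (EFin \o f).
  move=> mS SA mf hM; exact: bounded_int mS (finS _ mS SA) mf hM.
have hAU : A = (A `&` E) `|` (A `&` ~` E) by rewrite -setIUr setUCr setIT.
have mAE : measurable (A `&` E) by apply: measurableI.
have mAnE : measurable (A `&` ~` E) by apply: measurableI => //; apply: measurableC.
have dis : [disjoint A `&` E & A `&` ~` E].
  by apply/disj_set2P; rewrite setIACA setICr setI0.
have iA : (lebesgue_measure).-integrable A (EFin \o w) by apply: intS mA _ mw w1.
set G := \int[lebesgue_measure]_(r in A `&` E) w r.
set B := \int[lebesgue_measure]_(r in A `&` ~` E) w r.
have TGB : \int[lebesgue_measure]_(r in A) w r = G + B.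
  by rewrite {1}hAU Rintegral_setU // -hAU.
have c1' : c <= 1.
  rewrite /c expR_le1 mulNr oppr_le0 mulr_ge0 //; first by rewrite divr_ge0 // ltW.
  rewrite subr_ge0; move: tN; rewrite -(ltr_nat R) natrM; lra.
have c1 : `|c| <= 1 by rewrite ger0_norm // ltW.
set g1 := fine (lebesgue_measure (A `&` E)).
set g2 := fine (lebesgue_measure (A `&` ~` E)).
have g12 : g1 + g2 = xU - xL.
  have i1 : (lebesgue_measure).-integrable A (EFin \o (cst 1 : R -> R)).
    by apply: intS mA _ (measurable_cst _) _ => // r; rewrite normr1.
  have : \int[lebesgue_measure]_(r in A) (1 : R) =
     \int[lebesgue_measure]_(r in A `&` E) (1 : R) + \int[lebesgue_measure]_(r in A `&` ~` E) (1 : R).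
    by rewrite {1}hAU Rintegral_setU // -hAU.
  rewrite !Rintegral_cst // !mul1r => <-.
  exact: (congr1 fine muA).
have hG : c * g1 <= G.
  rewrite -Rintegral_cst //; apply: le_Rintegral => //.
  - exact: (intS _ (cst c) 1 mAE (@subIsetl _ _ _) (measurable_cst _) (fun=> c1)).
  - exact: (intS _ w 1 mAE (@subIsetl _ _ _) mw w1).
  - by move=> r [_ Er]; apply: wG.
have hB : B <= c * expR (- eps) * g2.
  rewrite -Rintegral_cst //; apply: le_Rintegral => //.
  - exact: (intS _ w 1 mAnE (@subIsetl _ _ _) mw w1).
  - apply: (intS _ _ 1 mAnE (@subIsetl _ _ _) (measurable_cst _)).
    move=> r /=; rewrite ger0_norm; last by rewrite mulr_ge0 ?expR_ge0 ?ltW.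
    apply: mulr_ile1 => //. all: try exact: ltW. all: try exact: expR_ge0. by rewrite expR_le1 oppr_le0 ltW.
  - by move=> r [_ nEr]; apply: wB.
have tlt : (t < N)%N by lia.
have jlt : (N - t.+1 < N)%N by lia.
pose it := Ordinal tlt. pose jt := Ordinal jlt.
have hdd : d <= x jt - x it by apply: hd.
have Isub : `]x it, x jt]%classic `<=` A `&` E.
  move=> r /=; rewrite in_itv /= => h.
  have [h1 h2] := Isub_lem hx hmono (erefl : nat_of_ord it = t) (erefl : nat_of_ord jt = (N - t.+1)%N) tN h.
  by split => //; rewrite /A /= in_itv.
have ijlt : x it < x jt by rewrite -subr_gt0; exact: lt_le_trans d0 hdd.
have g1d : d <= g1.
  have muI : lebesgue_measure (`]x it, x jt]%classic : set R) = (x jt - x it)%:E.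
    by rewrite lebesgue_measure_itv /= ifT // lte_fin.
  have : (lebesgue_measure (`]x it, x jt]%classic : set R) <= lebesgue_measure (A `&` E))%E.
    by apply: le_measure => //; rewrite inE //; exact: measurable_itv.
  rewrite muI -(@fineK _ (lebesgue_measure (A `&` E))) ?lee_fin; first by move=> h; apply: le_trans hdd h.
  by rewrite ge0_fin_numE ?measure_ge0 // finS // subIsetl.
have B0 : 0 <= B by apply: Rintegral_ge0 => r _; apply: w0.
rewrite /expmech_prob -/A TGB.
apply: (@final_alg R d (xU - xL) _ _ c (expR (- eps)) g1) => //.
- by apply: expR_gt0.
- by rewrite expR_lt1 oppr_lt0.
- by rewrite -g12 addrAC subrr add0r.
Qed.
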